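(* Let $N(r)\in\mathbb{R}[[r]]$, $r\in\mathbb{R}^d$, be a formal power series which is non-degenerate, i.e. there is no unit vector $\gamma\in\mathbb{R}^d$ with $\langle\partial_rN(r),\gamma\rangle=0$ as a formal series. Then there exist $p\in\mathbb{N}$ and $\sigma>0$ such that for every $k\in\mathbb{Z}^d\setminus\{0\}$ there is a unit vector $u_k\in\mathbb{R}^d$ for which the series $f_k(r)=\langle k/|k|,\partial_rN(r)\rangle$ satisfies $\max_{0\le j\le p}\left|\partial_t^j f_k(tu_k)\big|_{t=0}\right|\ge\sigma$.
   Context: For a formal series $f\in\mathbb{R}[[r]]$ and $u\in\mathbb{R}^d$, $\partial_t^jf(tu)|_{t=0}$ is $j!$ times the coefficient of $t^j$ in the formal series $t\mapsto f(tu)$. *)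

(* Defs.v *)
From Stdlib Require Import Reals ZArith Arith.
Open Scope R_scope.

(* Multi-indices alpha in N^d are encoded as functions nat -> nat; only
   those supported in {0,..,d-1} are relevant (see [supp_in]). *)
Definition mindex := nat -> nat.

(* A formal power series in r = (r_0,...,r_{d-1}): its coefficient family,
   N = sum_alpha N(alpha) r^alpha. *)
Definition fps := mindex -> R.

Definition supp_in (d : nat) (a : mindex) : Prop :=
  forall i, (d <= i)%nat -> a i = 0%nat.

Definition fps_eq0 (d : nat) (f : fps) : Prop :=
  forall a, supp_in d a -> f a = 0.

Definition upd (a : mindex) (i m : nat) : mindex :=
  fun l => if Nat.eqb l i then m else a l.

Definition incr (a : mindex) (i : nat) : mindex := upd a i (S (a i)).

Definition pderiv (f : fps) (i : nat) : fps :=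
  fun a => INR (S (a i)) * f (incr a i).

Fixpoint rsum (n : nat) (g : nat -> R) : R :=
  match n with O => 0 | S n' => rsum n' g + g n' end.
Fixpoint rprod (n : nat) (g : nat -> R) : R :=
  match n with O => 1 | S n' => rprod n' g * g n' end.

Definition dirderiv (d : nat) (N : fps) (v : nat -> R) : fps :=
  fun a => rsum d (fun i => v i * pderiv N i a).

Definition vnorm (d : nat) (v : nat -> R) : R := sqrt (rsum d (fun i => v i ^ 2)).
Definition is_unit (d : nat) (v : nat -> R) : Prop := vnorm d v = 1.

Definition nondegenerate (d : nat) (N : fps) : Prop :=
  ~ (exists g : nat -> R, is_unit d g /\ fps_eq0 d (dirderiv d N g)).

(* homsum d j F = sum of F a over multi-indices a supported in {0..d-1}
   with |a| = j (a finite sum). *)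
Fixpoint homsum (d j : nat) (F : mindex -> R) : R :=
  match d with
  | O => if Nat.eqb j 0 then F (fun _ => 0%nat) else 0
  | S d' => rsum (S j) (fun m => homsum d' (j - m) (fun b => F (upd b d' m)))
  end.

Definition mono (d : nat) (u : nat -> R) (a : mindex) : R :=
  rprod d (fun i => u i ^ (a i)).

(* d_t^j f(t u) |_{t=0} = j! * (coefficient of t^j in f(tu)). *)
Definition jet (d : nat) (f : fps) (u : nat -> R) (j : nat) : R :=
  INR (fact j) * homsum d j (fun a => f a * mono d u a).

Definition zdir (d : nat) (k : nat -> Z) : nat -> R :=
  fun i => IZR (k i) / vnorm d (fun l => IZR (k l)).

(* Main.v *)
Require Import Defs.
From Stdlib Require Import Reals ZArith Arith Lra Lia Psatz Classical FunctionalExtensionality.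
Open Scope R_scope.

Lemma rsum_ext n f g : (forall i, (i < n)%nat -> f i = g i) -> rsum n f = rsum n g.
Proof. induction n; simpl; intros H; auto. rewrite IHn by (intros; apply H; lia). rewrite H by lia; auto. Qed.

Lemma rsum_plus n f g : rsum n (fun i => f i + g i) = rsum n f + rsum n g.
Proof. induction n; simpl; [lra|]. rewrite IHn; lra. Qed.

Lemma rsum_scal n c f : rsum n (fun i => c * f i) = c * rsum n f.
Proof. induction n; simpl; [lra|]. rewrite IHn; lra. Qed.

Lemma rsum_scal_r n c f : rsum n (fun i => f i * c) = rsum n f * c.
Proof. induction n; simpl; [lra|]. rewrite IHn; lra. Qed.

Lemma rsum_zero n f : (forall i, (i < n)%nat -> f i = 0) -> rsum n f = 0.
Proof. intros H. transitivity (rsum n (fun _ => 0)). apply rsum_ext; auto.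
  induction n; simpl; auto. rewrite IHn by (intros; apply H; lia). lra. Qed.

Lemma rsum_swap n m (g : nat -> nat -> R) :
  rsum n (fun i => rsum m (fun k => g i k)) = rsum m (fun k => rsum n (fun i => g i k)).
Proof. induction n; simpl. symmetry; apply rsum_zero; auto.
  rewrite IHn. rewrite <- rsum_plus. auto. Qed.

Lemma rsum_le n f g : (forall i, (i < n)%nat -> f i <= g i) -> rsum n f <= rsum n g.
Proof. induction n; simpl; intros H; [lra|]. assert (f n <= g n) by (apply H; lia).
  assert (rsum n f <= rsum n g) by (apply IHn; intros; apply H; lia). lra. Qed.

Lemma rsum_abs n f : Rabs (rsum n f) <= rsum n (fun i => Rabs (f i)).
Proof. induction n; simpl. rewrite Rabs_R0; lra.
  eapply Rle_trans. apply Rabs_triang. lra. Qed.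

Lemma rsum_nonneg n f : (forall i, (i < n)%nat -> 0 <= f i) -> 0 <= rsum n f.
Proof. intros H. rewrite <- (rsum_zero n (fun _ => 0)) by auto. apply rsum_le; auto. Qed.

Lemma rsum_term_le n f i : (forall i, (i < n)%nat -> 0 <= f i) -> (i < n)%nat -> f i <= rsum n f.
Proof. induction n; simpl; intros H Hi; [lia|].
  assert (0 <= rsum n f) by (apply rsum_nonneg; intros; apply H; lia).
  destruct (Nat.eq_dec i n). subst; lra.
  assert (f i <= rsum n f) by (apply IHn; [intros; apply H; lia| lia]).
  assert (0 <= f n) by (apply H; lia). lra. Qed.

Lemma rsum_sq0 n f : rsum n (fun i => f i ^ 2) = 0 -> forall i, (i < n)%nat -> f i = 0.
Proof. intros H i Hi. assert (f i ^2 <= rsum n (fun i => f i ^ 2)).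
  apply (rsum_term_le n (fun i => f i ^ 2)); auto. intros; apply pow2_ge_0.
  assert (f i ^ 2 = 0) by (pose proof (pow2_ge_0 (f i)); lra). nra. Qed.

Lemma rsum_bound n g b : (forall m, (m < n)%nat -> g m <= b) -> rsum n g <= INR n * b.
Proof. induction n; intros H; simpl rsum. simpl; lra. rewrite S_INR.
  assert (rsum n g <= INR n * b) by (apply IHn; intros; apply H; lia).
  assert (g n <= b) by (apply H; lia). lra. Qed.

Fixpoint msize (d : nat) (a : mindex) : nat :=
  match d with O => O | S d' => (msize d' a + a d')%nat end.

Lemma msize_ext d a b : (forall i, (i < d)%nat -> a i = b i) -> msize d a = msize d b.
Proof. induction d; simpl; intros H; auto. rewrite IHd by (intros; apply H; lia). rewrite H by lia; auto. Qed.

Lemma upd_neq a i m l : l <> i -> upd a i m l = a l.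
Proof. intros H; unfold upd. destruct (Nat.eqb_spec l i); congruence. Qed.
Lemma upd_eq a i m : upd a i m i = m.
Proof. unfold upd. rewrite Nat.eqb_refl; auto. Qed.

Lemma homsum_ext_on d : forall j F G,
  (forall a, supp_in d a -> msize d a = j -> F a = G a) -> homsum d j F = homsum d j G.
Proof. induction d; intros j F G H; cbn [homsum].
  - destruct (Nat.eqb_spec j 0); auto. apply H; auto. intros i _; auto.
  - apply rsum_ext. intros m Hm. apply IHd. intros b Hb Hs. apply H.
    + intros i Hi. unfold upd. destruct (Nat.eqb_spec i d). lia. apply Hb; lia.
    + simpl. rewrite upd_eq. rewrite (msize_ext d _ b). lia.
      intros i Hi; apply upd_neq; lia.
Qed.

Lemma homsum_ext d j F G : (forall a, F a = G a) -> homsum d j F = homsum d j G.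
Proof. intros H; apply homsum_ext_on; auto. Qed.

Lemma homsum_plus d : forall j F G, homsum d j (fun a => F a + G a) = homsum d j F + homsum d j G.
Proof. induction d; intros j F G; cbn [homsum].
  - destruct (Nat.eqb j 0); lra.
  - rewrite <- rsum_plus. apply rsum_ext; intros. apply IHd. Qed.

Lemma homsum_scal d : forall j c F, homsum d j (fun a => c * F a) = c * homsum d j F.
Proof. induction d; intros j c F; cbn [homsum].
  - destruct (Nat.eqb j 0); lra.
  - rewrite <- rsum_scal. apply rsum_ext; intros. apply IHd. Qed.

Lemma homsum_zero d j : homsum d j (fun _ => 0) = 0.
Proof. transitivity (homsum d j (fun a => 0 * 0)). apply homsum_ext; intros; lra.
  rewrite (homsum_scal d j 0 (fun _ => 0)). lra. Qed.

Lemma homsum_rsum d j n (G : nat -> mindex -> R) :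
  homsum d j (fun a => rsum n (fun i => G i a)) = rsum n (fun i => homsum d j (G i)).
Proof. induction n; simpl. apply homsum_zero.
  rewrite homsum_plus, IHn; auto. Qed.

Lemma rprod_ext n f g : (forall i, (i < n)%nat -> f i = g i) -> rprod n f = rprod n g.
Proof. induction n; simpl; intros H; auto. rewrite IHn by (intros; apply H; lia). rewrite H by lia; auto. Qed.

Lemma mono_ext_u d u v a : (forall i, (i < d)%nat -> u i = v i) -> mono d u a = mono d v a.
Proof. intros H; unfold mono; apply rprod_ext; intros; rewrite H; auto. Qed.

Lemma mono_ext_a d u a b : (forall i, (i < d)%nat -> a i = b i) -> mono d u a = mono d u b.
Proof. intros H; unfold mono; apply rprod_ext; intros; rewrite H; auto. Qed.

Lemma mono_scal d c u a : mono d (fun i => c * u i) a = c ^ msize d a * mono d u a.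
Proof. unfold mono; induction d; simpl. lra. rewrite IHd, pow_add, Rpow_mult_distr. ring. Qed.

Lemma mono_upd d u b m : mono (S d) u (upd b d m) = mono d u b * u d ^ m.
Proof. unfold mono. simpl. rewrite upd_eq. f_equal. apply rprod_ext. intros; rewrite upd_neq; auto; lia. Qed.

Lemma mono_zero d u : mono d u (fun _ => 0%nat) = 1.
Proof. unfold mono; induction d; simpl; auto. unfold mono in IHd. simpl in IHd. rewrite IHd; ring. Qed.

Lemma poly_bound n c x : 1 <= x ->
  x * Rabs (rsum n (fun m => c m * x ^ m)) <= rsum n (fun m => Rabs (c m)) * x ^ n.
Proof. intros Hx. induction n; simpl. rewrite Rabs_R0; lra.
  assert (Rabs (rsum n (fun m => c m * x ^ m) + c n * x ^ n) <=
          Rabs (rsum n (fun m => c m * x ^ m)) + Rabs (c n) * x ^ n).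
  { eapply Rle_trans. apply Rabs_triang. rewrite Rabs_mult, (Rabs_right (x^n)). lra.
    apply Rle_ge, pow_le; lra. }
  assert (0 <= rsum n (fun m => Rabs (c m))) by (apply rsum_nonneg; intros; apply Rabs_pos).
  assert (x ^ n <= x * x ^ n). { assert (0 <= x^n) by (apply pow_le; lra). nra. }
  pose proof (Rabs_pos (c n)).
  nra. Qed.

Lemma poly_zero n c : (forall x, rsum n (fun m => c m * x ^ m) = 0) -> forall m, (m < n)%nat -> c m = 0.
Proof. revert c; induction n; intros c H m Hm. lia.
  assert (Hcn : c n = 0).
  { apply NNPP; intros Hne. set (B := rsum n (fun m => Rabs (c m))).
    assert (0 <= B) by (apply rsum_nonneg; intros; apply Rabs_pos).
    assert (Hp : 0 < Rabs (c n)) by (apply Rabs_pos_lt; auto).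
    set (x := 1 + (B + 1) / Rabs (c n)).
    assert (Hx1 : 1 <= x). { unfold x. assert (0 <= (B+1)/Rabs (c n)). apply Rle_mult_inv_pos; lra. lra. }
    pose proof (poly_bound n c x Hx1) as Hb. fold B in Hb.
    pose proof (H x) as Hx. simpl in Hx.
    assert (rsum n (fun m => c m * x ^ m) = - (c n * x ^ n)) by lra.
    rewrite H1, Rabs_Ropp, Rabs_mult, (Rabs_right (x^n)) in Hb by (apply Rle_ge, pow_le; lra).
    assert (0 < x ^ n) by (apply pow_lt; lra).
    assert (Rabs (c n) * x <= B) by nra.
    assert (Rabs (c n) * x = Rabs (c n) + B + 1). { unfold x. field. lra. }
    lra. }
  destruct (Nat.eq_dec m n). subst; auto.
  apply IHn; [|lia]. intros x. pose proof (H x). simpl in H0. rewrite Hcn in H0. lra.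
Qed.

Lemma homsum_scal_r d j c F : homsum d j (fun a => F a * c) = homsum d j F * c.
Proof. rewrite Rmult_comm, <- homsum_scal. apply homsum_ext; intros; ring. Qed.

Lemma idthm d : forall j F, (forall u, homsum d j (fun a => F a * mono d u a) = 0) ->
  forall a, supp_in d a -> msize d a = j -> F a = 0.
Proof. induction d; intros j F H a Ha Hs.
  - simpl in Hs. subst j. pose proof (H (fun _ => 0)) as H0. cbn [homsum Nat.eqb] in H0.
    assert (a = fun _ => 0%nat) by (apply functional_extensionality; intros; apply Ha; lia).
    subst a. unfold mono in H0; simpl in H0. lra.
  - assert (Hm : forall m v, (m <= j)%nat ->
       homsum d (j - m) (fun b => F (upd b d m) * mono d v b) = 0).
    { intros m v Hmj.
      apply (poly_zero (S j) (fun m => homsum d (j - m) (fun b => F (upd b d m) * mono d v b))); [|lia].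
      intros x. rewrite <- (H (fun i => if Nat.eqb i d then x else v i)). cbn [homsum].
      apply rsum_ext. intros m0 _. rewrite <- homsum_scal_r. apply homsum_ext. intros b.
      rewrite mono_upd. rewrite Nat.eqb_refl.
      rewrite (mono_ext_u d (fun i => if Nat.eqb i d then x else v i) v).
      ring. intros i Hi. destruct (Nat.eqb_spec i d); auto; lia. }
    simpl in Hs.
    set (b := upd a d 0).
    assert (Hb : supp_in d b). { intros i Hi. unfold b, upd. destruct (Nat.eqb_spec i d); auto. apply Ha; lia. }
    assert (Hbs : msize d b = (j - a d)%nat).
    { rewrite (msize_ext d b a). lia. intros i Hi; unfold b; apply upd_neq; lia. }
    assert (Hab : upd b d (a d) = a).
    { apply functional_extensionality; intros i. unfold b, upd. destruct (Nat.eqb_spec i d); subst; auto. }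
    rewrite <- Hab. apply (IHd (j - a d)%nat (fun b => F (upd b d (a d)))); auto.
    intros u. apply Hm. lia.
Qed.

Lemma homog d j F c u : homsum d j (fun a => F a * mono d (fun i => c * u i) a)
  = c ^ j * homsum d j (fun a => F a * mono d u a).
Proof. rewrite <- homsum_scal. apply homsum_ext_on. intros a _ Hs. rewrite mono_scal, Hs. ring. Qed.

Lemma homsum_u_ext d j F u v : (forall i, (i < d)%nat -> u i = v i) ->
  homsum d j (fun a => F a * mono d u a) = homsum d j (fun a => F a * mono d v a).
Proof. intros H; apply homsum_ext; intros; rewrite (mono_ext_u d u v); auto. Qed.

Definition e0 : nat -> R := fun i => if Nat.eqb i 0 then 1 else 0.

Lemma e0_sq d : (1 <= d)%nat -> rsum d (fun i => e0 i ^ 2) = 1.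
Proof. induction d; intros H. lia. destruct d. unfold e0; simpl. ring.
  change (rsum (S (S d)) (fun i => e0 i ^ 2)) with (rsum (S d) (fun i => e0 i ^2) + e0 (S d) ^ 2).
  rewrite IHd by lia. unfold e0; simpl. ring. Qed.

Lemma e0_unit d : (1 <= d)%nat -> is_unit d e0.
Proof. intros H; unfold is_unit, vnorm. rewrite e0_sq; auto. apply sqrt_1. Qed.

Lemma normalize_unit d u : 0 < rsum d (fun i => u i ^ 2) ->
  is_unit d (fun i => / sqrt (rsum d (fun i => u i ^ 2)) * u i).
Proof. intros H. set (s := rsum d (fun i => u i ^ 2)) in *. unfold is_unit, vnorm.
  assert (Hs : 0 < sqrt s) by (apply sqrt_lt_R0; auto).
  rewrite (rsum_ext d _ (fun i => / s * u i ^ 2)).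
  rewrite rsum_scal. fold s. rewrite Rinv_l by lra. apply sqrt_1.
  intros i _. rewrite Rpow_mult_distr. f_equal. rewrite pow_inv. f_equal. simpl. rewrite Rmult_1_r. apply sqrt_sqrt; lra.
Qed.

Lemma rsum_sq_nonneg d u : 0 <= rsum d (fun i => u i ^ 2).
Proof. apply rsum_nonneg; intros; apply pow2_ge_0. Qed.

Lemma sphere_ext d j F : (1 <= d)%nat ->
  (forall u, is_unit d u -> homsum d j (fun a => F a * mono d u a) = 0) ->
  forall u, homsum d j (fun a => F a * mono d u a) = 0.
Proof. intros Hd H u. pose proof (rsum_sq_nonneg d u) as Hn.
  destruct (Rle_lt_or_eq_dec _ _ Hn) as [Hp|Hz].
  - set (s := rsum d (fun i => u i ^ 2)) in *.
    assert (Hs : 0 < sqrt s) by (apply sqrt_lt_R0; auto).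
    rewrite (homsum_u_ext d j F u (fun i => sqrt s * (/ sqrt s * u i))).
    rewrite homog. rewrite H. ring. apply normalize_unit; auto.
    intros i _. field. lra.
  - rewrite (homsum_u_ext d j F u (fun i => 0 * e0 i)).
    rewrite homog, H. ring. apply e0_unit; auto.
    intros i Hi. rewrite (rsum_sq0 d u (eq_sym Hz) i Hi). ring.
Qed.

Definition lf (d : nat) (c g : nat -> R) : R := rsum d (fun i => c i * g i).

Lemma lf_S d c g : lf (S d) c g = lf d c g + c d * g d.
Proof. reflexivity. Qed.

Lemma lf_lin d a b k g : lf d (fun i => a i - k * b i) g = lf d a g - k * lf d b g.
Proof. unfold lf. rewrite <- rsum_scal.
  replace (rsum d (fun i => a i * g i) - rsum d (fun i => k * (b i * g i))) with
    (rsum d (fun i => a i * g i) + (-1) * rsum d (fun i => k * (b i * g i))) by ring.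
  rewrite <- (rsum_scal d (-1)).
  rewrite <- rsum_plus. apply rsum_ext; intros; ring. Qed.

Lemma lf_ext d c g h : (forall i, (i < d)%nat -> g i = h i) -> lf d c g = lf d c h.
Proof. intros H; unfold lf; apply rsum_ext; intros; rewrite H; auto. Qed.

Lemma lf_bound d c g : Rabs (lf d c g) <= rsum d (fun i => Rabs (c i)) * rsum d (fun i => Rabs (g i)).
Proof. unfold lf. eapply Rle_trans. apply rsum_abs. rewrite <- rsum_scal_r. apply rsum_le.
  intros i Hi. rewrite Rabs_mult. apply Rmult_le_compat_l. apply Rabs_pos.
  apply (rsum_term_le d (fun i => Rabs (g i))); auto. intros; apply Rabs_pos. Qed.

Lemma gauss d : forall (I : Type) (x_def : I) (F : I -> nat -> R),
  (forall g, (forall x, lf d (F x) g = 0) -> forall i, (i < d)%nat -> g i = 0) ->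
  exists n (xs : nat -> I) C, 0 < C /\ forall g,
    rsum d (fun i => Rabs (g i)) <= C * rsum n (fun m => Rabs (lf d (F (xs m)) g)).
Proof. induction d; intros I x_def F HF.
  - exists 0%nat, (fun _ => x_def), 1. split. lra. intros g; simpl; lra.
  - assert (Hx0 : exists x0, F x0 d <> 0).
    { apply NNPP; intros Hn.
      set (g := fun i => if Nat.eqb i d then 1 else 0).
      assert (g d = 0). { apply HF; [|lia]. intros x. rewrite lf_S.
        assert (F x d = 0) by (apply NNPP; intros Hc; apply Hn; exists x; auto).
        rewrite H. unfold lf. rewrite rsum_zero. ring. intros i Hi. unfold g.
        destruct (Nat.eqb_spec i d). lia. ring. }
      unfold g in H; rewrite Nat.eqb_refl in H. lra. }
    destruct Hx0 as [x0 Hx0].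
    set (k := fun x => F x d / F x0 d).
    set (F' := fun x i => F x i - k x * F x0 i).
    assert (Hkey : forall x g, lf d (F' x) g = lf (S d) (F x) g - k x * lf (S d) (F x0) g).
    { intros x g. unfold F'. rewrite lf_lin, !lf_S. unfold k. field. auto. }
    assert (HF' : forall g, (forall x, lf d (F' x) g = 0) -> forall i, (i < d)%nat -> g i = 0).
    { intros g Hg i Hi.
      set (t := - lf d (F x0) g / F x0 d).
      set (gt := fun i => if Nat.eqb i d then t else g i).
      assert (Hext : forall c, lf d c gt = lf d c g).
      { intros c; apply lf_ext. intros l Hl. unfold gt. destruct (Nat.eqb_spec l d); auto; lia. }
      assert (H0 : lf (S d) (F x0) gt = 0).
      { rewrite lf_S, Hext. unfold gt; rewrite Nat.eqb_refl. unfold t. field. auto. }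
      assert (gt i = 0). { apply HF; [|lia]. intros x.
        pose proof (Hkey x gt). rewrite Hext, Hg, H0 in H. lra. }
      unfold gt in H. destruct (Nat.eqb_spec i d). lia. auto. }
    destruct (IHd I x_def F' HF') as [n' [xs' [C' [HC' Hb']]]].
    set (K := 1 + rsum n' (fun m => Rabs (k (xs' m)))).
    set (B := rsum d (fun i => Rabs (F x0 i))).
    set (a := Rabs (F x0 d)).
    assert (Ha : 0 < a) by (apply Rabs_pos_lt; auto).
    assert (HK : 1 <= K). { unfold K. pose proof (rsum_nonneg n' (fun m => Rabs (k (xs' m)))). 
       assert (0 <= rsum n' (fun m => Rabs (k (xs' m)))) by (apply H; intros; apply Rabs_pos). lra. }
    assert (HB : 0 <= B) by (apply rsum_nonneg; intros; apply Rabs_pos).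
    exists (S n'), (fun m => if Nat.ltb m n' then xs' m else x0), (C' * K + (1 + B * C' * K) / a).
    split.
    { assert (0 < (1 + B * C' * K) / a). apply Rdiv_lt_0_compat; auto.
      assert (0 <= B * C' * K). repeat apply Rmult_le_pos; lra. lra. nra. }
    intros g.
    set (T := rsum (S n') (fun m => Rabs (lf (S d) (F (if Nat.ltb m n' then xs' m else x0)) g))).
    set (A := Rabs (lf (S d) (F x0) g)).
    set (S' := rsum n' (fun m => Rabs (lf (S d) (F (xs' m)) g))).
    assert (HT : T = S' + A).
    { unfold T. simpl rsum. rewrite Nat.ltb_irrefl. f_equal. apply rsum_ext.
      intros m Hm. destruct (Nat.ltb_spec m n'); auto; lia. }
    assert (HA : 0 <= A) by apply Rabs_pos.
    assert (HS' : 0 <= S') by (apply rsum_nonneg; intros; apply Rabs_pos).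
    set (Sg := rsum n' (fun m => Rabs (lf d (F' (xs' m)) g))).
    assert (HSg : Sg <= S' + (K - 1) * A).
    { unfold Sg, S', K. replace (1 + rsum n' (fun m => Rabs (k (xs' m))) - 1) with
        (rsum n' (fun m => Rabs (k (xs' m)))) by ring.
      rewrite <- rsum_scal_r, <- rsum_plus. apply rsum_le. intros m Hm.
      rewrite Hkey. eapply Rle_trans. apply Rabs_triang. rewrite Rabs_Ropp, Rabs_mult. fold A. lra. }
    assert (HG : rsum d (fun i => Rabs (g i)) <= C' * K * T).
    { eapply Rle_trans. apply Hb'. fold Sg. 
      assert (Sg <= K * T) by nra. 
      replace (C' * K * T) with (C' * (K * T)) by ring. apply Rmult_le_compat_l; lra. }
    set (G := rsum d (fun i => Rabs (g i))) in *.
    assert (HG0 : 0 <= G) by (apply rsum_nonneg; intros; apply Rabs_pos).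
    assert (Hgd : a * Rabs (g d) <= A + B * G).
    { unfold a, A. rewrite <- Rabs_mult. rewrite lf_S.
      pose proof (lf_bound d (F x0) g). fold B G in H.
      pose proof (Rabs_triang (lf d (F x0) g + F x0 d * g d) (- lf d (F x0) g)) as Ht.
      replace (lf d (F x0) g + F x0 d * g d + - lf d (F x0) g) with (F x0 d * g d) in Ht by ring.
      rewrite Rabs_Ropp in Ht. lra. }
    change (rsum (S d) (fun i => Rabs (g i))) with (G + Rabs (g d)).
    assert (Hgd' : Rabs (g d) <= (A + B * G) / a).
    { apply (Rmult_le_reg_l a); auto. unfold Rdiv. rewrite <- Rmult_assoc, (Rmult_comm a (A + B*G)),
        Rmult_assoc, Rinv_r; lra. }
    assert (HAT : A <= T) by lra.
    assert ((A + B * G) / a <= (1 + B * C' * K) / a * T).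
    { unfold Rdiv. rewrite Rmult_assoc, (Rmult_comm (/a) T), <- Rmult_assoc.
      apply Rmult_le_compat_r. left; apply Rinv_0_lt_compat; auto.
      assert (B * G <= B * (C' * K * T)) by (apply Rmult_le_compat_l; auto). nra. }
    nra.
Qed.

Lemma jet_lin d N g u j : jet d (dirderiv d N g) u j = lf d (fun i => jet d (pderiv N i) u j) g.
Proof. unfold jet, dirderiv, lf.
  rewrite (homsum_ext d j _ (fun a => rsum d (fun i => (pderiv N i a * mono d u a) * g i))).
  rewrite homsum_rsum. rewrite <- rsum_scal. apply rsum_ext. intros i _.
  rewrite homsum_scal_r. ring.
  intros a. rewrite <- rsum_scal_r. apply rsum_ext; intros; ring. Qed.

Lemma dirderiv_scal d N c g a : dirderiv d N (fun i => c * g i) a = c * dirderiv d N g a.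
Proof. unfold dirderiv. rewrite <- rsum_scal. apply rsum_ext; intros; ring. Qed.

Lemma norm_sq1 d u : 0 < rsum d (fun i => u i ^ 2) ->
  rsum d (fun i => (/ sqrt (rsum d (fun i => u i ^ 2)) * u i) ^ 2) = 1.
Proof. intros H. set (s := rsum d (fun i => u i ^ 2)) in *.
  rewrite (rsum_ext d _ (fun i => / s * u i ^ 2)).
  rewrite rsum_scal. fold s. rewrite Rinv_l by lra. auto.
  intros i _. rewrite Rpow_mult_distr. f_equal. rewrite pow_inv. f_equal. simpl. rewrite Rmult_1_r. apply sqrt_sqrt; lra.
Qed.

Lemma sum_abs_ge1 d g : rsum d (fun i => g i ^ 2) = 1 -> 1 <= rsum d (fun i => Rabs (g i)).
Proof. intros H. rewrite <- H. apply rsum_le. intros i Hi.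
  assert (g i ^ 2 <= 1). { rewrite <- H. apply (rsum_term_le d (fun i => g i ^ 2)); auto. intros; apply pow2_ge_0. }
  pose proof (Rabs_pos (g i)). rewrite <- (pow2_abs (g i)) in *. nra. Qed.

Fixpoint pmax (f : nat -> nat) (n : nat) : nat :=
  match n with O => O | S n' => Nat.max (pmax f n') (f n') end.

Lemma pmax_ge f n m : (m < n)%nat -> (f m <= pmax f n)%nat.
Proof. induction n; simpl; intros H. lia. destruct (Nat.eq_dec m n). subst; lia.
  specialize (IHn ltac:(lia)). lia. Qed.

Theorem lemma5p1 (d : nat) (N : fps) (hN : nondegenerate d N) :
  exists (p : nat) (sigma : R), 0 < sigma /\
    forall k : nat -> Z, (exists i, (i < d)%nat /\ k i <> 0%Z) ->
      exists u : nat -> R, is_unit d u /\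
        exists j : nat, (j <= p)%nat /\
          sigma <= Rabs (jet d (dirderiv d N (zdir d k)) u j).
Proof.
  destruct (Nat.eq_dec d 0) as [Hd0|Hd].
  { exists 0%nat, 1. split. lra. intros k [i [Hi _]]. lia. }
  assert (Hd1 : (1 <= d)%nat) by lia.
  set (I := {x : (nat -> R) * nat | is_unit d (fst x)}).
  set (x_def := exist (fun x : (nat -> R) * nat => is_unit d (fst x)) (e0, 0%nat) (e0_unit d Hd1) : I).
  set (F := fun (x : I) i => jet d (pderiv N i) (fst (proj1_sig x)) (snd (proj1_sig x))).
  assert (HF : forall g, (forall x, lf d (F x) g = 0) -> forall i, (i < d)%nat -> g i = 0).
  { intros g Hg i Hi. apply NNPP; intros Hne.
    set (s := rsum d (fun l => g l ^ 2)).
    assert (Hs : 0 < s).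
    { assert (g i ^ 2 <= s) by (apply (rsum_term_le d (fun l => g l ^ 2)); auto; intros; apply pow2_ge_0).
      assert (0 < g i ^ 2) by (pose proof (Rsqr_pos_lt _ Hne); unfold Rsqr in *; simpl; lra). lra. }
    assert (Hgn : is_unit d (fun l => / sqrt s * g l)) by (apply normalize_unit; auto).
    assert (Hnz : ~ fps_eq0 d (dirderiv d N (fun l => / sqrt s * g l))).
    { intros Hz. apply hN. exists (fun l => / sqrt s * g l). split; auto. }
    apply Hnz. intros a Ha. rewrite dirderiv_scal.
    assert (dirderiv d N g a = 0).
    { apply (idthm d (msize d a) (dirderiv d N g)); auto.
      apply sphere_ext; auto. intros u Hu.
      pose proof (Hg (exist _ (u, msize d a) Hu)) as H1. unfold F in H1; simpl in H1.
      rewrite <- jet_lin in H1. unfold jet in H1.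
      apply Rmult_integral in H1. destruct H1; auto. exfalso; apply (INR_fact_neq_0 _ H). }
    rewrite H; ring. }
  destruct (gauss d I x_def F HF) as [n [xs [C [HC Hb]]]].
  exists (pmax (fun m => snd (proj1_sig (xs m))) n), (/ (C * (INR n + 1))).
  assert (Hn0 : 0 <= INR n) by apply pos_INR.
  split. { apply Rinv_0_lt_compat. nra. }
  intros k [i [Hi Hki]].
  set (kk := fun l => IZR (k l)).
  set (s := rsum d (fun l => kk l ^ 2)).
  assert (Hs : 0 < s).
  { assert (kk i ^ 2 <= s) by (apply (rsum_term_le d (fun l => kk l ^ 2)); auto; intros; apply pow2_ge_0).
    assert (kk i <> 0) by (unfold kk; apply not_0_IZR; auto).
    assert (0 < kk i ^ 2) by (pose proof (Rsqr_pos_lt _ H0); unfold Rsqr in *; simpl; lra). lra. }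
  assert (Hz : forall l, zdir d k l = / sqrt s * kk l).
  { intros l. unfold zdir, vnorm, s, kk, Rdiv. ring. }
  assert (Hg2 : rsum d (fun l => zdir d k l ^ 2) = 1).
  { rewrite <- (norm_sq1 d kk Hs). apply rsum_ext; intros. rewrite Hz; auto. }
  pose proof (sum_abs_ge1 d _ Hg2) as H1.
  pose proof (Hb (zdir d k)) as H2.
  set (T := rsum n (fun m => Rabs (lf d (F (xs m)) (zdir d k)))) in *.
  assert (Hex : exists m, (m < n)%nat /\ / (C * (INR n + 1)) <= Rabs (lf d (F (xs m)) (zdir d k))).
  { apply NNPP; intros Hno.
    assert (T <= INR n * / (C * (INR n + 1))).
    { apply rsum_bound. intros m Hm. apply Rnot_lt_le. intros Hlt. apply Hno. exists m. split; auto. lra. }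
    assert (INR n * / (C * (INR n + 1)) < / C).
    { apply (Rmult_lt_reg_l (C * (INR n + 1))). nra.
      rewrite Rmult_comm, Rmult_assoc, Rinv_l by nra. 
      replace (C * (INR n + 1) * / C) with (INR n + 1) by (field; lra). lra. }
    assert (C * T < 1). { apply (Rmult_lt_reg_l (/ C)). apply Rinv_0_lt_compat; auto.
      rewrite <- Rmult_assoc, Rinv_l by lra. lra. }
    lra. }
  destruct Hex as [m [Hm Hge]].
  exists (fst (proj1_sig (xs m))). split. apply (proj2_sig (xs m)).
  exists (snd (proj1_sig (xs m))). split. apply (pmax_ge (fun m => snd (proj1_sig (xs m)))); auto.
  rewrite jet_lin. exact Hge.
Qed.
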